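(* Let $m>0$, $\gamma\in\mathbb{R}$, $f$ a real function, and consider the system $$i\partial_t\psi_1=\partial_x\psi_2-f(|\psi_1|^2-|\psi_2|^2)\psi_1+m\psi_1+i\gamma\psi_2,\qquad i\partial_t\psi_2=-\partial_x\psi_1+f(|\psi_1|^2-|\psi_2|^2)\psi_2-m\psi_2+i\gamma\psi_1.$$ Suppose $(\tilde v(x),\tilde u(x))$ (complex-valued) is such that $(\tilde v,\tilde u)^Te^{-i\tilde\omega t}$ is a solution. Then for all $\alpha_\pm\in\mathbb{C}$ with $|\alpha_-|^2-|\alpha_+|^2=1$, $$\psi_1(t,x)=\alpha_-\tilde v(x)e^{-i\tilde\omega t}-i\alpha_+\overline{\tilde u(x)}e^{i\tilde\omega t},\qquad \psi_2(t,x)=\alpha_-\tilde u(x)e^{-i\tilde\omega t}-i\alpha_+\overline{\tilde v(x)}e^{i\tilde\omega t}$$ is also a solution, and $|\psi_1|^2-|\psi_2|^2=|\tilde v|^2-|\tilde u|^2$ for all $t$.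
   Context: This is the one-dimensional Soler model with a $\mathcal{P}\mathcal{T}$-symmetric gain–loss term $i\gamma\sigma_1\psi$ (the case $\gamma=0$ is the ordinary 1D Soler model). Overline denotes complex conjugation. *)

(* Defs.v *)
From Stdlib Require Import Reals Lra.
Open Scope R_scope.

Definition Cplx : Type := (R * R)%type.
Definition Cre (z : Cplx) : R := fst z.
Definition Cim (z : Cplx) : R := snd z.
Definition Cof (r : R) : Cplx := (r, 0).
Definition Ci : Cplx := (0, 1).
Definition Cadd (z w : Cplx) : Cplx := (fst z + fst w, snd z + snd w).
Definition Copp (z : Cplx) : Cplx := (- fst z, - snd z).
Definition Csub (z w : Cplx) : Cplx := Cadd z (Copp w).
Definition Cmul (z w : Cplx) : Cplx :=
  (fst z * fst w - snd z * snd w, fst z * snd w + snd z * fst w).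
Definition Cconj (z : Cplx) : Cplx := (fst z, - snd z).
Definition Cnorm2 (z : Cplx) : R := fst z * fst z + snd z * snd z.
Definition Cexpi (theta : R) : Cplx := (cos theta, sin theta).

Definition Cderiv (g : R -> Cplx) (s : R) (d : Cplx) : Prop :=
  derivable_pt_lim (fun r => fst (g r)) s (fst d) /\
  derivable_pt_lim (fun r => snd (g r)) s (snd d).

Definition is_solution (m gamma : R) (f : R -> R) (psi1 psi2 : R -> R -> Cplx) : Prop :=
  forall t x : R,
    exists d1t d1x d2t d2x : Cplx,
      Cderiv (fun s => psi1 s x) t d1t /\
      Cderiv (fun y => psi1 t y) x d1x /\
      Cderiv (fun s => psi2 s x) t d2t /\
      Cderiv (fun y => psi2 t y) x d2x /\
      let F := f (Cnorm2 (psi1 t x) - Cnorm2 (psi2 t x)) in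
      Cmul Ci d1t =
        Cadd (Cadd (Csub d2x (Cmul (Cof F) (psi1 t x))) (Cmul (Cof m) (psi1 t x)))
             (Cmul (Cmul Ci (Cof gamma)) (psi2 t x)) /\
      Cmul Ci d2t =
        Cadd (Csub (Cadd (Copp d1x) (Cmul (Cof F) (psi2 t x))) (Cmul (Cof m) (psi2 t x)))
             (Cmul (Cmul Ci (Cof gamma)) (psi1 t x)).

(* Main.v *)
Require Import Defs.
From Stdlib Require Import Reals Lra FunctionalExtensionality.
Open Scope R_scope.

Lemma Cderiv_const (c : Cplx) s : Cderiv (fun _ => c) s (0,0).
Proof. split; simpl; apply derivable_pt_lim_const. Qed.

Lemma Cderiv_mul g h s dg dh : Cderiv g s dg -> Cderiv h s dh ->
  Cderiv (fun r => Cmul (g r) (h r)) s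
    (Cadd (Cmul dg (h s)) (Cmul (g s) dh)).
Proof.
  intros [g1 g2] [h1 h2]; unfold Cmul, Cadd; split; simpl.
  - replace (fst dg * fst (h s) - snd dg * snd (h s) +
      (fst (g s) * fst dh - snd (g s) * snd dh)) with
     ((fst dg * fst (h s) + fst (g s) * fst dh) - (snd dg * snd (h s) + snd (g s) * snd dh)) by ring.
    apply (derivable_pt_lim_minus (fun r => fst (g r) * fst (h r)) (fun r => snd (g r) * snd (h r))).
    + apply (derivable_pt_lim_mult (fun r => fst (g r)) (fun r => fst (h r))); auto.
    + apply (derivable_pt_lim_mult (fun r => snd (g r)) (fun r => snd (h r))); auto.
  - replace (fst dg * snd (h s) + snd dg * fst (h s) +
      (fst (g s) * snd dh + snd (g s) * fst dh)) with
     ((fst dg * snd (h s) + fst (g s) * snd dh) + (snd dg * fst (h s) + snd (g s) * fst dh)) by ring.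
    apply (derivable_pt_lim_plus (fun r => fst (g r) * snd (h r)) (fun r => snd (g r) * fst (h r))).
    + apply (derivable_pt_lim_mult (fun r => fst (g r)) (fun r => snd (h r))); auto.
    + apply (derivable_pt_lim_mult (fun r => snd (g r)) (fun r => fst (h r))); auto.
Qed.

Lemma Cderiv_sub g h s dg dh : Cderiv g s dg -> Cderiv h s dh ->
  Cderiv (fun r => Csub (g r) (h r)) s (Csub dg dh).
Proof.
  intros [g1 g2] [h1 h2]; unfold Csub, Cadd, Copp; split; simpl.
  - apply (derivable_pt_lim_minus (fun r => fst (g r)) (fun r => fst (h r))); auto.
  - apply (derivable_pt_lim_minus (fun r => snd (g r)) (fun r => snd (h r))); auto.
Qed.

Lemma Cderiv_conj g s dg : Cderiv g s dg ->
  Cderiv (fun r => Cconj (g r)) s (Cconj dg).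
Proof.
  intros [g1 g2]; unfold Cconj; split; simpl; auto.
  apply (derivable_pt_lim_opp (fun r => snd (g r))); auto.
Qed.

Lemma Cderiv_expi k s : Cderiv (fun r => Cexpi (k * r)) s
  (Cmul (0, k) (Cexpi (k * s))).
Proof.
  unfold Cexpi, Cmul; split; simpl.
  - replace (0 * cos (k * s) - k * sin (k * s)) with (- sin (k*s) * k) by ring.
    apply (derivable_pt_lim_comp (fun r => k * r) cos).
    + assert (H:=derivable_pt_lim_scal id k s 1 (derivable_pt_lim_id s)); rewrite Rmult_1_r in H; exact H.
    + apply derivable_pt_lim_cos.
  - replace (0 * sin (k * s) + k * cos (k * s)) with (cos (k*s) * k) by ring.
    apply (derivable_pt_lim_comp (fun r => k * r) sin).
    + assert (H:=derivable_pt_lim_scal id k s 1 (derivable_pt_lim_id s)); rewrite Rmult_1_r in H; exact H.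
    + apply derivable_pt_lim_sin.
Qed.

Lemma Cderiv_unique g s d1 d2 : Cderiv g s d1 -> Cderiv g s d2 -> d1 = d2.
Proof.
  intros [a b] [c d]. destruct d1, d2; simpl in *.
  f_equal; eapply uniqueness_limite; eauto.
Qed.

Theorem mainTheorem6 (m gamma : R) (f : R -> R) (v u : R -> Cplx) (omega : R)
  (Hm : 0 < m)
  (Hsol : is_solution m gamma f
            (fun t x => Cmul (v x) (Cexpi (- omega * t)))
            (fun t x => Cmul (u x) (Cexpi (- omega * t))))
  (am ap : Cplx) (Ha : Cnorm2 am - Cnorm2 ap = 1) :
  let psi1 := fun t x =>
    Csub (Cmul am (Cmul (v x) (Cexpi (- omega * t))))
         (Cmul Ci (Cmul ap (Cmul (Cconj (u x)) (Cexpi (omega * t))))) in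
  let psi2 := fun t x =>
    Csub (Cmul am (Cmul (u x) (Cexpi (- omega * t))))
         (Cmul Ci (Cmul ap (Cmul (Cconj (v x)) (Cexpi (omega * t))))) in
  is_solution m gamma f psi1 psi2 /\
  (forall t x : R,
     Cnorm2 (psi1 t x) - Cnorm2 (psi2 t x) = Cnorm2 (v x) - Cnorm2 (u x)).
Proof.
  assert (Hcn : forall t, cos (- omega * t) = cos (omega * t)).
  { intro t. replace (- omega * t) with (- (omega * t)) by ring. apply cos_neg. }
  assert (Hsn : forall t, sin (- omega * t) = - sin (omega * t)).
  { intro t. replace (- omega * t) with (- (omega * t)) by ring. apply sin_neg. }
  assert (Hn : forall t x,
     Cnorm2 (Csub (Cmul am (Cmul (v x) (Cexpi (- omega * t))))
         (Cmul Ci (Cmul ap (Cmul (Cconj (u x)) (Cexpi (omega * t)))))) -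
     Cnorm2 (Csub (Cmul am (Cmul (u x) (Cexpi (- omega * t))))
         (Cmul Ci (Cmul ap (Cmul (Cconj (v x)) (Cexpi (omega * t)))))) =
     Cnorm2 (v x) - Cnorm2 (u x)).
  { intros t x. unfold Cexpi. rewrite Hcn, Hsn.
    pose proof (sin2_cos2 (omega * t)) as Hsc. unfold Rsqr in Hsc.
    destruct (v x) as [v1 v2], (u x) as [u1 u2], am as [a1 a2], ap as [b1 b2].
    unfold Cnorm2 in *; simpl in *.
    set (c := cos (omega * t)) in *. set (s := sin (omega * t)) in *.
    transitivity ((a1 * a1 + a2 * a2 - (b1 * b1 + b2 * b2)) * (s * s + c * c) *
       (v1 * v1 + v2 * v2 - (u1 * u1 + u2 * u2))).
    - ring.
    - rewrite Ha, Hsc. ring. }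
  cbv zeta. split; [| exact Hn].
  intros t x.
  pose proof (Hsol 0 x) as [d1t [d1x [d2t [d2x [D1t [D1x [D2t [D2x [E1 E2]]]]]]]]].
  cbv beta zeta in *.
  assert (Hf0 : forall z, Cmul z (Cexpi (- omega * 0)) = z).
  { intros [z1 z2]. unfold Cexpi, Cmul. rewrite Rmult_0_r, cos_0, sin_0; simpl. f_equal; ring. }
  rewrite !Hf0 in E1, E2.
  assert (Ev : (fun y => Cmul (v y) (Cexpi (- omega * 0))) = v)
    by (apply functional_extensionality; intro; apply Hf0).
  assert (Eu : (fun y => Cmul (u y) (Cexpi (- omega * 0))) = u)
    by (apply functional_extensionality; intro; apply Hf0).
  rewrite Ev in D1x. rewrite Eu in D2x.
  assert (T1 := Cderiv_mul _ _ 0 _ _ (Cderiv_const (v x) 0) (Cderiv_expi (- omega) 0)).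
  assert (T2 := Cderiv_mul _ _ 0 _ _ (Cderiv_const (u x) 0) (Cderiv_expi (- omega) 0)).
  rewrite (Cderiv_unique _ _ _ _ D1t T1) in E1.
  rewrite (Cderiv_unique _ _ _ _ D2t T2) in E2.
  clear D1t D2t T1 T2 Ev Eu d1t d2t.
  set (F0 := f (Cnorm2 (v x) - Cnorm2 (u x))) in *.
  do 4 eexists.
  split; [repeat first [apply Cderiv_const | apply Cderiv_sub | apply Cderiv_mul
     | apply Cderiv_conj | apply Cderiv_expi | exact D1x | exact D2x] |].
  split; [repeat first [apply Cderiv_const | apply Cderiv_sub | apply Cderiv_mul
     | apply Cderiv_conj | apply Cderiv_expi | exact D1x | exact D2x] |].
  split; [repeat first [apply Cderiv_const | apply Cderiv_sub | apply Cderiv_mul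
     | apply Cderiv_conj | apply Cderiv_expi | exact D1x | exact D2x] |].
  split; [repeat first [apply Cderiv_const | apply Cderiv_sub | apply Cderiv_mul
     | apply Cderiv_conj | apply Cderiv_expi | exact D1x | exact D2x] |].
  rewrite Hn. fold F0.
  clear D1x D2x Hsol Hn Hf0.
  unfold Cexpi in *. rewrite Rmult_0_r, cos_0, sin_0 in E1, E2. rewrite !Hcn, !Hsn.
  set (c := cos (omega * t)) in *. set (s := sin (omega * t)) in *.
  destruct (v x) as [v1 v2], (u x) as [u1 u2], am as [a1 a2], ap as [b1 b2],
    d1x as [p1 p2], d2x as [q1 q2].
  unfold Cmul, Cadd, Csub, Copp, Cconj, Ci, Cof in *; simpl in *.
  injection E1 as E11 E12. injection E2 as E21 E22.
  assert (Q1 : q1 = omega * v1 + F0 * v1 - m * v1 + gamma * u2) by lra.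
  assert (Q2 : q2 = omega * v2 + F0 * v2 - m * v2 - gamma * u1) by lra.
  assert (P1 : p1 = - omega * u1 + F0 * u1 - m * u1 - gamma * v2) by lra.
  assert (P2 : p2 = - omega * u2 + F0 * u2 - m * u2 + gamma * v1) by lra.
  subst q1 q2 p1 p2.
  split; f_equal; ring.
Qed.
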